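(* The constrained equal-distance rule and the proportional rule are obviously manipulable on $\mathcal{E}_{\mathcal{SP}}$.
   Context: Let $N=\{1,\dots,n\}$ be a finite set of agents. A preference $R_i$ is a continuous complete preorder on $\mathbb{R}_+\cup\{\infty\}$ ($P_i$ strict part); its peak $p(R_i)$ is the set of maximal elements. $R_i$ is single-peaked if $p(R_i)$ is a singleton (identified with its element) and for $x,x'\in\mathbb{R}_+$, $xP_ix'$ whenever $x'<x\le p(R_i)$ or $p(R_i)\le x<x'$; $\mathcal{SP}$ is the set of these. An economy is $(R,\Omega)$, $R\in\mathcal{SP}^n$, $\Omega>0$; $\mathcal{E}_{\mathcal{SP}}$ is the set of economies; a rule is a map $\varphi:\mathcal{E}_{\mathcal{SP}}\to\mathbb{R}^n_+$ with $\sum_j\varphi_j=\Omega$. Constrained equal-distance rule $CED$: $CED_i(R,\Omega)=\max\{p(R_i)-d,0\}$ if $\sum_jp(R_j)\ge\Omega$ and $CED_i(R,\Omega)=p(R_i)+d$ if $\sum_jp(R_j)<\Omega$, where $d\ge0$ solves $\sum_jCED_j(R,\Omega)=\Omega$. Proportional rule $Pro$: $Pro_i(R,\Omega)=\frac{p(R_i)}{\sum_jp(R_j)}\Omega$ if $\sum_jp(R_j)>0$ and $\Omega/n$ otherwise. Option set $O^\varphi(R_i,\Omega)=\{\varphi_i(R_i,R_{-i},\Omega):R_{-i}\in\mathcal{SP}^{n-1}\}$. $R_i'$ is a manipulation at $(R_i,\Omega)$ if $\varphi_i(R_i',R_{-i},\Omega)P_i\varphi_i(R_i,R_{-i},\Omega)$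 for some $R_{-i}$; an obvious manipulation if moreover each $x'\in O^\varphi(R_i',\Omega)$ satisfies $x'P_ix$ for some $x\in O^\varphi(R_i,\Omega)$. A rule is obviously manipulable if it admits an obvious manipulation. *)

(* Defs.v *)
From Stdlib Require Import Reals Lra List ClassicalEpsilon.
Import ListNotations.
Open Scope R_scope.

(** The consumption space R_+ ∪ {∞}: [Some x] (with 0 <= x) is the real x,
    [None] is ∞. *)
Definition pt := option R.
Definition inX (x : pt) : Prop :=
  match x with Some r => 0 <= r | None => True end.

(** A preference is a binary relation on [pt]; [Rel x y] means x R_i y. *)
Definition pref := pt -> pt -> Prop.

Definition strict (Rel : pref) (x y : pt) : Prop := Rel x y /\ ~ Rel y x.

(** Sequential convergence in R_+ ∪ {∞} (order topology of [0,∞]). *)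
Definition conv (u : nat -> pt) (l : pt) : Prop :=
  match l with
  | Some a => forall eps, 0 < eps -> exists N, forall k, (N <= k)%nat ->
                exists r, u k = Some r /\ Rabs (r - a) < eps
  | None => forall M, exists N, forall k, (N <= k)%nat ->
                match u k with None => True | Some r => M < r end
  end.

Definition complete_preorder (Rel : pref) : Prop :=
  (forall x y, inX x -> inX y -> Rel x y \/ Rel y x) /\
  (forall x y z, inX x -> inX y -> inX z -> Rel x y -> Rel y z -> Rel x z).

Definition continuous_pref (Rel : pref) : Prop :=
  forall y u l, inX y -> (forall k, inX (u k)) -> conv u l ->
    ((forall k, Rel (u k) y) -> Rel l y) /\ ((forall k, Rel y (u k)) -> Rel y l).

Definition is_preference (Rel : pref) : Prop :=
  complete_preorder Rel /\ continuous_pref Rel.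

Definition single_peaked_at (Rel : pref) (p : R) : Prop :=
  0 <= p /\
  (forall x, inX x -> ((forall y, inX y -> Rel x y) <-> x = Some p)) /\
  (forall x x', 0 <= x -> 0 <= x' ->
     ((x' < x /\ x <= p) \/ (p <= x /\ x < x')) ->
     strict Rel (Some x) (Some x')).

Definition SP (Rel : pref) : Prop :=
  is_preference Rel /\ exists p, single_peaked_at Rel p.

(** The peak p(R_i) (well defined on SP). *)
Definition peak (Rel : pref) : R :=
  epsilon (inhabits 0) (fun p => single_peaked_at Rel p).

(** Profiles: agents are 0, ..., n-1. *)
Definition profile := nat -> pref.

Definition sum_agents (n : nat) (f : nat -> R) : R :=
  fold_right Rplus 0 (map f (seq 0 n)).

Definition psum (n : nat) (Rp : profile) : R :=
  sum_agents n (fun j => peak (Rp j)).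

Definition valid_profile (n : nat) (Rp : profile) : Prop :=
  forall j, (j < n)%nat -> SP (Rp j).

(** A rule: given n, a profile and Ω, the amount of each agent. *)
Definition rule := nat -> profile -> R -> nat -> R.

Definition ced_alloc (n : nat) (Rp : profile) (Om d : R) (i : nat) : R :=
  if Rle_dec Om (psum n Rp) then Rmax (peak (Rp i) - d) 0
  else peak (Rp i) + d.

Definition ced_d (n : nat) (Rp : profile) (Om : R) : R :=
  epsilon (inhabits 0)
    (fun d => 0 <= d /\ sum_agents n (ced_alloc n Rp Om d) = Om).

Definition CED : rule := fun n Rp Om i => ced_alloc n Rp Om (ced_d n Rp Om) i.

Definition Pro : rule := fun n Rp Om i =>
  if Rlt_dec 0 (psum n Rp) then peak (Rp i) / psum n Rp * Om
  else Om / INR n.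

Definition upd (Rp : profile) (i : nat) (Ri : pref) : profile :=
  fun j => if Nat.eqb j i then Ri else Rp j.

Definition valid_others (n i : nat) (Rp : profile) : Prop :=
  forall j, (j < n)%nat -> j <> i -> SP (Rp j).

Definition option_set (phi : rule) (n i : nat) (Ri : pref) (Om : R) (x : R) : Prop :=
  exists Rmi, valid_others n i Rmi /\ x = phi n (upd Rmi i Ri) Om i.

Definition manipulation (phi : rule) (n i : nat) (Ri Ri' : pref) (Om : R) : Prop :=
  SP Ri' /\
  exists Rmi, valid_others n i Rmi /\
    strict Ri (Some (phi n (upd Rmi i Ri') Om i)) (Some (phi n (upd Rmi i Ri) Om i)).

Definition obvious_manipulation (phi : rule) (n i : nat) (Ri Ri' : pref) (Om : R) : Prop :=
  manipulation phi n i Ri Ri' Om /\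
  forall x', option_set phi n i Ri' Om x' ->
    exists x, option_set phi n i Ri Om x /\ strict Ri (Some x') (Some x).

Definition obviously_manipulable (phi : rule) (n : nat) : Prop :=
  exists i Ri Om Ri', (i < n)%nat /\ SP Ri /\ 0 < Om /\
    obvious_manipulation phi n i Ri Ri' Om.

(* Main.v *)
Require Import Defs.
From Stdlib Require Import Reals.
From Stdlib Require Import Reals Lra Lia List ClassicalEpsilon FunctionalExtensionality.
Import ListNotations.
Open Scope R_scope.

Ltac rabs := unfold Rabs in *; repeat destruct Rcase_abs; lra.

Definition prefp (p : R) : pref := fun x y =>
  match x, y with
  | Some a, Some b => Rabs (a - p) <= Rabs (b - p)
  | Some _, None => True
  | None, Some _ => False
  | None, None => True
  end.

Lemma prefp_strict p x y : Rabs (x - p) < Rabs (y - p) -> strict (prefp p) (Some x) (Some y).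
Proof. intros H; unfold strict, prefp; split; lra. Qed.

Lemma prefp_spa p : 0 <= p -> single_peaked_at (prefp p) p.
Proof.
  intros Hp; split; [exact Hp|split].
  - intros x Hx; split.
    + intros H; destruct x as [a|].
      * specialize (H (Some p) Hp); unfold prefp in H. f_equal. rabs.
      * specialize (H (Some 0) (Rle_refl 0)); simpl in H; contradiction.
    + intros -> y Hy; destruct y as [b|]; unfold prefp; [rabs|exact I].
  - intros x x' H0 H1 H; apply prefp_strict; rabs.
Qed.

Lemma prefp_SP p : 0 <= p -> Defs.SP (prefp p).
Proof.
  intros Hp; split; [|exists p; apply prefp_spa; exact Hp].
  split; [split|].
  - intros [a|] [b|] _ _; unfold prefp; auto. lra.
  - intros [a|] [b|] [c|] _ _ _; unfold prefp; auto; try lra; tauto.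
  - intros y u l Hy Hu Hc. destruct l as [a|]; simpl in Hc.
    + split.
      * intros H. destruct y as [b|]; unfold prefp; [|exact I].
        apply Rnot_lt_le; intro Hlt.
        destruct (Hc (Rabs (a-p) - Rabs (b-p))) as [N HN]; [lra|].
        destruct (HN N (le_n N)) as [r [Hr1 Hr2]]. specialize (H N).
        rewrite Hr1 in H; unfold prefp in H. rabs.
      * intros H. destruct (Hc 1) as [N1 HN1]; [lra|].
        destruct y as [b|]; unfold prefp.
        -- apply Rnot_lt_le; intro Hlt.
           destruct (Hc (Rabs (b-p) - Rabs (a-p))) as [N HN]; [lra|].
           destruct (HN N (le_n N)) as [r [Hr1 Hr2]]. specialize (H N).
           rewrite Hr1 in H; unfold prefp in H. rabs.
        -- destruct (HN1 N1 (le_n N1)) as [r [Hr1 _]]. specialize (H N1).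
           rewrite Hr1 in H; unfold prefp in H; exact H.
    + split.
      * intros H. destruct y as [b|]; unfold prefp; [|exact I].
        destruct (Hc (p + Rabs (b-p))) as [N HN].
        specialize (HN N (le_n N)). specialize (H N).
        destruct (u N) as [r|]; unfold prefp in H; [rabs|exact H].
      * intros _; destruct y; unfold prefp; exact I.
Qed.

Lemma peak_eq Rel p : single_peaked_at Rel p -> peak Rel = p.
Proof.
  intros H. unfold peak.
  assert (Hq := epsilon_spec (inhabits 0) (fun q => single_peaked_at Rel q) (ex_intro _ p H)).
  set (q := epsilon (inhabits 0) (fun q => single_peaked_at Rel q)) in *.
  destruct Hq as [Hq0 [Hq1 _]]. destruct H as [Hp0 [Hp1 _]].
  assert (Some q = Some p).
  { apply (proj1 (Hp1 (Some q) Hq0)). apply (proj2 (Hq1 (Some q) Hq0)). reflexivity. }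
  injection H; auto.
Qed.

Lemma peak_prefp p : 0 <= p -> peak (prefp p) = p.
Proof. intros; apply peak_eq, prefp_spa; auto. Qed.

Lemma peak_nonneg Rel : Defs.SP Rel -> 0 <= peak Rel.
Proof. intros [_ [p Hp]]. rewrite (peak_eq _ _ Hp). apply Hp. Qed.

Definition fr (l : list nat) (f : nat -> R) := fold_right Rplus 0 (map f l).

Lemma fr_plus_const l g d : fr l (fun j => g j + d) = fr l g + INR (length l) * d.
Proof.
  induction l as [|a l IH]; unfold fr in *; simpl; [lra|].
  rewrite IH. destruct (length l); simpl; lra.
Qed.

Lemma fr_ext l f g : (forall j, In j l -> f j = g j) -> fr l f = fr l g.
Proof. intros H; unfold fr; f_equal; apply map_ext_in; auto. Qed.

Lemma fr_zero l f : (forall j, In j l -> f j = 0) -> fr l f = 0.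
Proof.
  induction l as [|a l IH]; intros H; unfold fr in *; simpl; [lra|].
  rewrite IH; [|intros; apply H; simpl; auto].
  rewrite (H a); [lra|simpl; auto].
Qed.

Lemma fr_nonneg l f : (forall j, In j l -> 0 <= f j) -> 0 <= fr l f.
Proof.
  induction l as [|a l IH]; intros H; unfold fr in *; simpl; [lra|].
  assert (0 <= f a) by (apply H; simpl; auto).
  assert (0 <= fold_right Rplus 0 (map f l)) by (apply IH; intros; apply H; simpl; auto).
  lra.
Qed.

Lemma fr_ge l f : (forall j, In j l -> 0 <= f j) -> forall j, In j l -> f j <= fr l f.
Proof.
  induction l as [|a l IH]; intros H j Hj; unfold fr in *; simpl in *; [contradiction|].
  assert (0 <= f a) by (apply H; simpl; auto).
  assert (0 <= fold_right Rplus 0 (map f l)) by (apply (fr_nonneg l f); intros; apply H; simpl; auto).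
  destruct Hj as [->|Hj]; [lra|].
  assert (f j <= fold_right Rplus 0 (map f l)) by (apply IH; auto).
  lra.
Qed.

Lemma cont_rmax a : continuity (fun d => Rmax (a - d) 0).
Proof.
  assert (E : (fun d => Rmax (a - d) 0) = (fun d => ((a - d) + Rabs (a - d)) / 2)).
  { apply functional_extensionality; intros d. unfold Rmax; destruct Rle_dec; rabs. }
  rewrite E. intros x.
  apply continuity_pt_div.
  - apply continuity_pt_plus.
    + apply continuity_pt_minus; [apply continuity_pt_const; intros ? ?; auto|apply derivable_continuous_pt, derivable_pt_id].
    + apply (continuity_pt_comp (fun d => a - d) Rabs).
      * apply continuity_pt_minus; [apply continuity_pt_const; intros ? ?; auto|apply derivable_continuous_pt, derivable_pt_id].
      * apply Rcontinuity_abs.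
  - apply continuity_pt_const; intros ? ?; auto.
  - lra.
Qed.

Lemma cont_fr l a : continuity (fun d => fr l (fun j => Rmax (a j - d) 0)).
Proof.
  induction l as [|b l IH]; unfold fr in *; simpl.
  - apply continuity_const; intros ? ?; auto.
  - apply continuity_plus; [apply cont_rmax|exact IH].
Qed.

Lemma ced_exists n Rp Om : (0 < n)%nat -> 0 < Om ->
  (forall j, (j < n)%nat -> 0 <= peak (Rp j)) ->
  exists d, 0 <= d /\ sum_agents n (ced_alloc n Rp Om d) = Om.
Proof.
  intros Hn HOm Hpk.
  assert (HN : 0 < INR n) by (apply lt_0_INR; exact Hn).
  assert (Hin : forall j, In j (seq 0 n) -> 0 <= peak (Rp j)).
  { intros j Hj; apply in_seq in Hj; apply Hpk; lia. }
  unfold ced_alloc, sum_agents; destruct (Rle_dec Om (psum n Rp)) as [Hle|Hgt].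
  - set (g := fun d => fr (seq 0 n) (fun j => Rmax (peak (Rp j) - d) 0) - Om).
    assert (Hg : continuity g).
    { unfold g; apply continuity_minus; [apply cont_fr|apply continuity_const; intros ? ?; auto]. }
    assert (Hps : 0 <= psum n Rp) by (apply (fr_nonneg (seq 0 n)); auto).
    assert (g0 : g 0 = psum n Rp - Om).
    { unfold g; f_equal. unfold psum, sum_agents. apply fr_ext; intros j Hj.
      rewrite Rmax_left; [lra|]. specialize (Hin j Hj); lra. }
    assert (g1 : g (psum n Rp) = - Om).
    { unfold g. rewrite fr_zero; [lra|]. intros j Hj.
      rewrite Rmax_right; [lra|].
      assert (peak (Rp j) <= psum n Rp) by (apply (fr_ge (seq 0 n) (fun j => peak (Rp j))); auto).
      lra. }
    destruct (IVT_cor g 0 (psum n Rp) Hg Hps) as [z [Hz1 Hz2]].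
    { rewrite g0, g1. nra. }
    exists z; split; [lra|]. unfold g in Hz2. fold (fr (seq 0 n) (fun j => Rmax (peak (Rp j) - z) 0)). lra.
  - exists ((Om - psum n Rp) / INR n). split.
    + unfold Rdiv; apply Rmult_le_pos; [lra|left; apply Rinv_0_lt_compat; lra].
    + fold (fr (seq 0 n) (fun j => peak (Rp j) + (Om - psum n Rp) / INR n)).
      rewrite (fr_plus_const _ (fun j => peak (Rp j))), length_seq.
      unfold psum, sum_agents; fold (fr (seq 0 n) (fun j => peak (Rp j))). field. lra.
Qed.

Lemma ced_gt_val n Rp Om i : (0 < n)%nat -> psum n Rp < Om ->
  CED n Rp Om i = peak (Rp i) + (Om - psum n Rp) / INR n.
Proof.
  intros Hn Hlt.
  assert (HN : 0 < INR n) by (apply lt_0_INR; exact Hn).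
  assert (spec : exists d, 0 <= d /\ sum_agents n (ced_alloc n Rp Om d) = Om).
  { exists ((Om - psum n Rp) / INR n). split.
    + unfold Rdiv; apply Rmult_le_pos; [lra|left; apply Rinv_0_lt_compat; lra].
    + unfold ced_alloc, sum_agents; destruct (Rle_dec Om (psum n Rp)); [lra|].
      fold (fr (seq 0 n) (fun j => peak (Rp j) + (Om - psum n Rp) / INR n)).
      rewrite (fr_plus_const _ (fun j => peak (Rp j))), length_seq.
      unfold psum, sum_agents; fold (fr (seq 0 n) (fun j => peak (Rp j))). field. lra. }
  assert (Hs : 0 <= ced_d n Rp Om /\ sum_agents n (ced_alloc n Rp Om (ced_d n Rp Om)) = Om)
    by exact (epsilon_spec (inhabits 0) (fun d => 0 <= d /\ sum_agents n (ced_alloc n Rp Om d) = Om) spec).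
  unfold CED. set (d := ced_d n Rp Om) in *. destruct Hs as [_ Hs].
  unfold ced_alloc, sum_agents in *. destruct (Rle_dec Om (psum n Rp)); [lra|].
  fold (fr (seq 0 n) (fun j => peak (Rp j) + d)) in Hs.
  rewrite (fr_plus_const _ (fun j => peak (Rp j))), length_seq in Hs.
  unfold psum, sum_agents in *; fold (fr (seq 0 n) (fun j => peak (Rp j))) in *.
  rewrite <- Hs. field. lra.
Qed.

Lemma ced_bound n Rp Om : (0 < n)%nat -> 0 < Om ->
  (forall j, (j < n)%nat -> 0 <= peak (Rp j)) -> peak (Rp 0%nat) = 0 ->
  0 <= CED n Rp Om 0%nat <= Om / INR n.
Proof.
  intros Hn HOm Hpk H0.
  assert (HN : 0 < INR n) by (apply lt_0_INR; exact Hn).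
  assert (Hps : 0 <= psum n Rp).
  { apply (fr_nonneg (seq 0 n)); intros j Hj; apply in_seq in Hj; apply Hpk; lia. }
  destruct (Rle_dec Om (psum n Rp)) as [Hle|Hgt].
  - destruct (ced_exists n Rp Om Hn HOm Hpk) as [d0 Hd0].
    assert (Hs : 0 <= ced_d n Rp Om /\ sum_agents n (ced_alloc n Rp Om (ced_d n Rp Om)) = Om)
      by exact (epsilon_spec (inhabits 0) (fun d => 0 <= d /\ sum_agents n (ced_alloc n Rp Om d) = Om) (ex_intro _ d0 Hd0)).
    unfold CED, ced_alloc. destruct (Rle_dec Om (psum n Rp)); [|lra].
    rewrite H0, Rmax_right; [|lra].
    split; [lra|]. unfold Rdiv; apply Rmult_le_pos; [lra|left; apply Rinv_0_lt_compat; lra].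
  - rewrite (ced_gt_val n Rp Om 0%nat Hn); [|lra]. rewrite H0, Rplus_0_l.
    split.
    + unfold Rdiv; apply Rmult_le_pos; [lra|left; apply Rinv_0_lt_compat; lra].
    + unfold Rdiv; apply Rmult_le_compat_r; [left; apply Rinv_0_lt_compat; lra|lra].
Qed.

Lemma psum_upd n Rmi Ri : (0 < n)%nat ->
  psum n (upd Rmi 0%nat Ri) = peak Ri + fr (seq 1 (n - 1)) (fun j => peak (Rmi j)).
Proof.
  intros Hn. destruct n as [|m]; [lia|].
  replace (S m - 1)%nat with m by lia.
  unfold psum, sum_agents. cbn [seq map fold_right]. unfold upd at 1. simpl Nat.eqb.
  f_equal. apply fr_ext. intros j Hj. apply in_seq in Hj. unfold upd.
  destruct (Nat.eqb_spec j 0); [lia|reflexivity].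
Qed.

Definition Z0 : profile := fun _ => prefp 0.

Lemma Z0_valid n i : valid_others n i Z0.
Proof. intros j _ _; apply prefp_SP; lra. Qed.

Lemma psum_Z0 n Ri : (0 < n)%nat -> psum n (upd Z0 0%nat Ri) = peak Ri.
Proof.
  intros Hn; rewrite psum_upd by exact Hn. rewrite fr_zero; [lra|].
  intros; unfold Z0; apply peak_prefp; lra.
Qed.

Lemma valid_upd n Rmi Ri : (0 < n)%nat -> valid_others n 0%nat Rmi -> Defs.SP Ri ->
  forall j, (j < n)%nat -> 0 <= peak (upd Rmi 0%nat Ri j).
Proof.
  intros Hn Hv HR j Hj. unfold upd. destruct (Nat.eqb_spec j 0).
  - apply peak_nonneg; exact HR.
  - apply peak_nonneg; apply Hv; auto.
Qed.

Lemma pro_mis n Rmi Om : Pro n (upd Rmi 0%nat (prefp 0)) Om 0%nat = 0 \/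
                         Pro n (upd Rmi 0%nat (prefp 0)) Om 0%nat = Om / INR n.
Proof.
  unfold Pro. destruct (Rlt_dec 0 (psum n (upd Rmi 0%nat (prefp 0)))); [left|right; reflexivity].
  unfold upd; simpl Nat.eqb; cbv beta iota. rewrite peak_prefp by lra. unfold Rdiv; ring.
Qed.

Theorem proposition2 : forall n : nat, (2 <= n)%nat ->
  obviously_manipulable CED n /\ obviously_manipulable Pro n.
Proof.
  intros n Hn.
  assert (Hn0 : (0 < n)%nat) by lia.
  assert (HN2 : 2 <= INR n) by (replace 2 with (INR 2) by (simpl; lra); apply le_INR; exact Hn).
  set (N := INR n) in *.
  set (t := / N).
  assert (Ht : N * t = 1) by (unfold t; field; lra).
  assert (Ht0 : 0 < t) by (unfold t; apply Rinv_0_lt_compat; lra).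
  assert (Ht1 : t <= 1/2) by nra.
  set (Om := 2 * (N + 1)).
  assert (HOm : 0 < Om) by (unfold Om; lra).
  assert (E1 : Om / N = 2 + 2 * t) by (unfold Om, t; field; lra).
  assert (E2 : (Om - 1) / N = 2 + t) by (unfold Om, t; field; lra).
  assert (SP1 : Defs.SP (prefp 1)) by (apply prefp_SP; lra).
  assert (SP0 : Defs.SP (prefp 0)) by (apply prefp_SP; lra).
  split.
  - set (w := CED n (upd Z0 0%nat (prefp 1)) Om 0%nat).
    assert (Hw : w = 3 + t).
    { assert (Hp1 : psum n (upd Z0 0%nat (prefp 1)) < Om)
        by (rewrite psum_Z0 by exact Hn0; rewrite peak_prefp by lra; unfold Om; lra).
      unfold w. rewrite (ced_gt_val _ _ _ _ Hn0 Hp1).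
      rewrite psum_Z0 by auto. unfold upd; simpl Nat.eqb. rewrite peak_prefp by lra.
      fold N. rewrite E2. rewrite peak_prefp by lra. lra. }
    assert (key : forall Rmi, valid_others n 0%nat Rmi ->
      strict (prefp 1) (Some (CED n (upd Rmi 0%nat (prefp 0)) Om 0%nat)) (Some w)).
    { intros Rmi Hv. apply prefp_strict.
      destruct (ced_bound n (upd Rmi 0%nat (prefp 0)) Om Hn0 HOm (valid_upd n Rmi _ Hn0 Hv SP0)) as [B1 B2].
      { unfold upd; simpl Nat.eqb; apply peak_prefp; lra. }
      fold N in B2. rewrite E1 in B2. rewrite Hw. rabs. }
    exists 0%nat, (prefp 1), Om, (prefp 0).
    split; [exact Hn0|split; [exact SP1|split; [exact HOm|]]].
    split.
    + split; [exact SP0|]. exists Z0; split; [apply Z0_valid|]. apply key, Z0_valid.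
    + intros x' [Rmi [Hv ->]]. exists w; split.
      * exists Z0; split; [apply Z0_valid|reflexivity].
      * apply key; exact Hv.
  - set (w := Pro n (upd Z0 0%nat (prefp 1)) Om 0%nat).
    assert (Hw : w = Om).
    { unfold w, Pro. rewrite psum_Z0 by auto. rewrite peak_prefp by lra.
      destruct (Rlt_dec 0 1); [|lra]. unfold upd; simpl Nat.eqb.
      cbv iota. rewrite peak_prefp by lra. field. }
    assert (key : forall Rmi,
      strict (prefp 1) (Some (Pro n (upd Rmi 0%nat (prefp 0)) Om 0%nat)) (Some w)).
    { intros Rmi. apply prefp_strict. rewrite Hw.
      destruct (pro_mis n Rmi Om) as [H|H]; rewrite H; [|fold N; rewrite E1]; unfold Om; rabs. }
    exists 0%nat, (prefp 1), Om, (prefp 0).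
    split; [exact Hn0|split; [exact SP1|split; [exact HOm|]]].
    split.
    + split; [exact SP0|]. exists Z0; split; [apply Z0_valid|]. apply key.
    + intros x' [Rmi [Hv ->]]. exists w; split.
      * exists Z0; split; [apply Z0_valid|reflexivity].
      * apply key.
Qed.
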